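(* Let $M$ be a Turing machine with bi-infinite tape, tape symbols $\{0,1,3\}$ ($0$ the blank), and states $Q=\{0,1,\dots,|Q|-1\}$, and let $\mathrm{Next}$ map a configuration of $M$ to the next one. There is a function $\overline{\mathrm{Next}}$ in $\mathbb{LDL}^\circ$ such that for every configuration $C$ of $M$ in which all non-blank tape symbols are $1$ or $3$, $\overline{\mathrm{Next}}(\gamma_{config}(C))=\gamma_{config}(\mathrm{Next}(C))$. Moreover $\overline{\mathrm{Next}}$ is essentially linear.
   Context: A configuration with tape $\dots l_{-k}\dots l_{-1}l_0r_0r_1\dots r_n\dots$ and head on $r_0$ is written $C=(q,l,r)$ with $l=l_0l_{-1}l_{-2}\dots$, $r=r_0r_1\dots$ (possibly infinite words) and $q\in Q$ the state. For a word $w=w_0w_1w_2\dots$, $\gamma_{word}(w)=\sum_{i\ge0}w_i4^{-(i+1)}$, and $\gamma_{config}(q,l,r)=(q,\gamma_{word}(l),\gamma_{word}(r))$. $\ell$ is the binary length; $\overline{\mathrm{sg}}:\mathbb R\to\mathbb R$ is a fixed continuous piecewise affine function equal to $1$ for $x>3/4$ and $0$ for $x<1/4$. An $\overline{\mathrm{sg}}$-polynomial expression is built from $+,-,\times,\overline{\mathrm{sg}}$ over variables and integer constants; $\deg(x,x)=1$, $\deg(x,x')=0$ for other variables/constants, $\deg(x,P+Q)=\max$, $\deg(x,P\times Q)=$ sum, $\deg(x,\overline{\mathrm{sg}}(P))=0$. An expression is essentially linear in a vector of variables $\mathbf f$ if it equals $\mathbf A\cdot\mathbf f+\mathbf B$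 with $\mathbf A,\mathbf B$ $\overline{\mathrm{sg}}$-polynomial expressions of degree $0$ in $\mathbf f$. Linear length ODE schema: $\mathbf f(0,\mathbf y)=\mathbf g(\mathbf y)$, $\mathbf f(x+1,\mathbf y)=\mathbf f(x,\mathbf y)+(\ell(x+1)-\ell(x))\,\mathbf u(\mathbf f(x,\mathbf y),\mathbf h(x,\mathbf y),x,\mathbf y)$ with $\mathbf u$ an $\overline{\mathrm{sg}}$-polynomial expression essentially linear in $\mathbf f(x,\mathbf y)$. $\mathbb{LDL}^\circ$: smallest class of functions (with arguments/values in $\mathbb N,\mathbb Z,\mathbb Q,\mathbb R$, composition partial) containing $0,1$, projections, $\ell$, $+,-,\times$ (over the reals), $\overline{\mathrm{sg}}$, $x\mapsto x/2$, closed under composition and linear length ODE.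
   Formalization: The hypothesis on C is that no blank precedes a non-blank symbol in l or in r, and the expressions making $\overline{\mathrm{Next}}$ essentially linear may use halving x ↦ x/2 beyond +, −, ×, $\overline{\mathrm{sg}}$ and integer constants. The paper assumes this as well. *)

(* Defs.v *)
From Stdlib Require Import Reals List ZArith Lia.
From Coquelicot Require Import Coquelicot.
Import ListNotations.
Open Scope R_scope.

Inductive sym := B0 | S1 | S3.
Definition symval (s : sym) : R := match s with B0 => 0 | S1 => 1 | S3 => 3 end.

Inductive move := MoveL | MoveR.

Record TM := mkTM {
  nQ : nat;
  delta : nat -> sym -> nat * sym * move;
  delta_ok : forall q s, (q < nQ)%nat -> (fst (fst (delta q s)) < nQ)%nat }.

(* A (possibly infinite) word w_0 w_1 ...; finite words are padded with blanks. *)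
Definition word := nat -> sym.

(* Configuration (q, l, r): l = l_0 l_{-1} ..., r = r_0 r_1 ..., head on r_0. *)
Record config := mkConfig { cq : nat; cl : word; cr : word }.

Definition Next (M : TM) (C : config) : config :=
  let '(q', w, m) := delta M (cq C) (cr C 0%nat) in
  match m with
  | MoveR => mkConfig q' (fun i => match i with O => w | S j => cl C j end)
                         (fun i => cr C (S i))
  | MoveL => mkConfig q' (fun i => cl C (S i))
                         (fun i => match i with
                                   | O => cl C 0%nat
                                   | 1%nat => w
                                   | S (S j) => cr C (S j) end)
  end.

(* The word consists of symbols 1,3 possibly followed by blanks forever,
   i.e. it is a (possibly infinite) word over {1,3}. *)
Definition word13 (w : word) : Prop := forall i, w i = B0 -> w (S i) = B0.

Definition gamma_word (w : word) : R :=
  Series (fun i => symval (w i) / 4 ^ (S i)).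

Definition gamma_config (C : config) : list R :=
  [INR (cq C); gamma_word (cl C); gamma_word (cr C)].

(* binary length, with ell 0 = 1 *)
Definition ell (n : nat) : nat := S (Nat.log2 n).

Definition sgbar (x : R) : R := Rmin 1 (Rmax 0 (2 * x - / 2)).

(* Some n iff x is the natural number n *)
Definition natof (x : R) : option nat :=
  let n := Z.to_nat (up x - 1) in
  if Req_EM_T x (INR n) then Some n else None.

(* EHalf (x |-> x/2) is an extra constructor used only for the
   "essentially linear" claim about NextBar; sg-polynomial expressions
   proper are the half-free ones. *)
Inductive expr :=
| EVar (i : nat) | ECst (z : Z)
| EAdd (a b : expr) | ESub (a b : expr) | EMul (a b : expr)
| ESg (a : expr) | EHalf (a : expr).

Fixpoint eval (env : list R) (e : expr) : R :=
  match e with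
  | EVar i => nth i env 0
  | ECst z => IZR z
  | EAdd a b => eval env a + eval env b
  | ESub a b => eval env a - eval env b
  | EMul a b => eval env a * eval env b
  | ESg a => sgbar (eval env a)
  | EHalf a => eval env a / 2
  end.

Fixpoint deg (v : nat) (e : expr) : nat :=
  match e with
  | EVar i => if Nat.eqb i v then 1%nat else 0%nat
  | ECst _ => 0%nat
  | EAdd a b | ESub a b => Nat.max (deg v a) (deg v b)
  | EMul a b => (deg v a + deg v b)%nat
  | ESg _ => 0%nat
  | EHalf a => deg v a
  end.

Fixpoint halffree (e : expr) : Prop :=
  match e with
  | EVar _ | ECst _ => True
  | EAdd a b | ESub a b | EMul a b => halffree a /\ halffree b
  | ESg a => halffree a
  | EHalf _ => False
  end.

Definition deg0 (V : list nat) (e : expr) : Prop := forall v, In v V -> deg v e = 0%nat.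

(* e is essentially linear in the variables V: e = A . V + B with A, B of
   degree 0 in V (equality as functions). If sgpoly = true, e, A, B must be
   genuine sg-polynomial expressions (no EHalf). *)
Definition ess_linear (sgpoly : bool) (V : list nat) (e : expr) : Prop :=
  exists (A : list expr) (B : expr),
    length A = length V /\
    (forall a, In a A -> deg0 V a /\ (sgpoly = true -> halffree a)) /\
    deg0 V B /\
    (sgpoly = true -> halffree e /\ halffree B) /\
    forall env, eval env e =
      fold_right Rplus 0 (map (fun p => eval env (fst p) * nth (snd p) env 0) (combine A V))
      + eval env B.

Definition fn := list R -> option (list R).

Definition bindo {A B : Type} (o : option A) (f : A -> option B) : option B :=
  match o with Some a => f a | None => None end.

(* f(0,y) = g(y); f(n+1,y) = f(n,y) + (ell(n+1)-ell(n)) u(f(n,y), h(n,y), n, y);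
   variables of u: f at 0..d-1, then h, then x, then y. *)
Fixpoint ode_iter (g h : fn) (u : list expr) (n : nat) (ys : list R) : option (list R) :=
  match n with
  | O => g ys
  | S n' =>
      bindo (ode_iter g h u n' ys) (fun fv =>
      bindo (h (INR n' :: ys)) (fun hv =>
      Some (map (fun p => fst p + (INR (ell n) - INR (ell n'))
                                  * eval (fv ++ hv ++ INR n' :: ys) (snd p))
                (combine fv u))))
  end.

Definition ode_sol (g h : fn) (u : list expr) : fn := fun xs =>
  match xs with
  | [] => None
  | x :: ys => bindo (natof x) (fun n => ode_iter g h u n ys)
  end.

(* LDL n m F : F is an LDL° function with n arguments and m results *)
Inductive LDL : nat -> nat -> fn -> Prop :=
| LDL_zero : LDL 0 1 (fun _ => Some [0])
| LDL_one : LDL 0 1 (fun _ => Some [1])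
| LDL_proj n i : (i < n)%nat -> LDL n 1 (fun xs => Some [nth i xs 0])
| LDL_ell : LDL 1 1 (fun xs => bindo (natof (nth 0 xs 0)) (fun k => Some [INR (ell k)]))
| LDL_add : LDL 2 1 (fun xs => Some [nth 0 xs 0 + nth 1 xs 0])
| LDL_sub : LDL 2 1 (fun xs => Some [nth 0 xs 0 - nth 1 xs 0])
| LDL_mul : LDL 2 1 (fun xs => Some [nth 0 xs 0 * nth 1 xs 0])
| LDL_sg : LDL 1 1 (fun xs => Some [sgbar (nth 0 xs 0)])
| LDL_half : LDL 1 1 (fun xs => Some [nth 0 xs 0 / 2])
| LDL_pair n m1 m2 F G : LDL n m1 F -> LDL n m2 G ->
    LDL n (m1 + m2) (fun xs => bindo (F xs) (fun a => bindo (G xs) (fun b => Some (a ++ b))))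
| LDL_comp n k m G F : LDL n k G -> LDL k m F -> LDL n m (fun xs => bindo (G xs) F)
| LDL_ode k d e g h u : LDL k d g -> LDL (S k) e h -> length u = d ->
    (forall uj, In uj u -> ess_linear true (seq 0 d) uj) ->
    LDL (S k) d (ode_sol g h u)
| LDL_ext n m F G : LDL n m F -> (forall xs, length xs = n -> F xs = G xs) -> LDL n m G.

(* Main.v *)
From Pilot Require Import Defs.
From Stdlib Require Import Reals List.
From Stdlib Require Import Lia Lra ZArith.
From Coquelicot Require Import Coquelicot.
Import Pilot.Defs.
Import ListNotations.
Open Scope R_scope.

Definition ga (w : word) (i : nat) : R := symval (w i) / 4 ^ (S i).

Lemma symval_bd s : 0 <= symval s <= 3.
Proof. destruct s; simpl; lra. Qed.

Lemma ga_bd w n : 0 <= ga w n <= 3/4 * (/4)^n.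
Proof.
  unfold ga. rewrite pow_inv. simpl.
  assert (0 < 4 ^ n) by (apply pow_lt; lra).
  pose proof (symval_bd (w n)).
  split.
  - apply Rmult_le_pos; [lra|]. apply Rlt_le, Rinv_0_lt_compat; nra.
  - unfold Rdiv. rewrite Rinv_mult.
    assert (0 < / 4 ^ n) by (apply Rinv_0_lt_compat; lra).
    nra.
Qed.

Lemma geo_ex : ex_series (fun n => 3/4 * (/4)^n).
Proof.
  exists (3/4 * / (1 - /4)).
  apply (is_series_scal_l (K:=R_AbsRing) (V:=R_NormedModule) (3/4) (fun n => (/4)^n)).
  apply is_series_geom. rewrite Rabs_pos_eq; lra.
Qed.

Lemma geo_val : Series (fun n => 3/4 * (/4)^n) = 1.
Proof.
  apply is_series_unique.
  replace 1 with (3/4 * / (1 - /4)) by field.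
  apply (is_series_scal_l (K:=R_AbsRing) (V:=R_NormedModule) (3/4) (fun n => (/4)^n)).
  apply is_series_geom. rewrite Rabs_pos_eq; lra.
Qed.

Lemma ga_ex w : ex_series (ga w).
Proof.
  apply (ex_series_le (K:=R_AbsRing) (V:=R_CompleteNormedModule) _ (fun n => 3/4 * (/4)^n)); [|apply geo_ex].
  intros n. change (norm (ga w n)) with (Rabs (ga w n)).
  pose proof (ga_bd w n). rewrite Rabs_pos_eq; lra.
Qed.

Lemma Series_zero : Series (fun _ => 0) = 0.
Proof.
  rewrite (Series_ext _ (fun n => 0 * 0)) by (intros; ring).
  rewrite (Series_scal_l 0 (fun _ => 0)). ring.
Qed.

Lemma g_bd w : 0 <= gamma_word w <= 1.
Proof.
  unfold gamma_word. fold (ga w). split.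
  - rewrite <- Series_zero. apply Series_le; [|apply ga_ex].
    intros n; pose proof (ga_bd w n); lra.
  - rewrite <- geo_val. apply Series_le; [|apply geo_ex]. apply ga_bd.
Qed.

Lemma g_ext w w' : (forall i, w i = w' i) -> gamma_word w = gamma_word w'.
Proof. intros H. unfold gamma_word. apply Series_ext. intros n; rewrite H; auto. Qed.

Lemma g_cons w : gamma_word w = symval (w 0%nat) / 4 + gamma_word (fun i => w (S i)) / 4.
Proof.
  unfold gamma_word. fold (ga w). rewrite Series_incr_1 by apply ga_ex.
  unfold ga at 1. replace (4 ^ 1) with 4 by (simpl; ring). f_equal.
  rewrite (Series_ext _ (fun n => /4 * ga (fun i => w (S i)) n)).
  - rewrite Series_scal_l. unfold ga. lra.
  - intros n. unfold ga. simpl. field; try (apply pow_nonzero; lra).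
Qed.

Lemma g_zero w : (forall i, w i = B0) -> gamma_word w = 0.
Proof.
  intros H. rewrite <- Series_zero. unfold gamma_word. apply Series_ext.
  intros n; rewrite H; simpl; unfold Rdiv; ring.
Qed.

Lemma sg_hi x : 3/4 <= x -> sgbar x = 1.
Proof. intros; unfold sgbar, Rmin, Rmax; repeat destruct Rle_dec; lra. Qed.
Lemma sg_lo x : x <= 1/4 -> sgbar x = 0.
Proof. intros; unfold sgbar, Rmin, Rmax; repeat destruct Rle_dec; lra. Qed.

Lemma w13_all w : word13 w -> w 0%nat = B0 -> forall i, w i = B0.
Proof. intros H H0 i; induction i; auto. Qed.

Lemma readsym w : word13 w ->
  sgbar (4 * gamma_word w) = (match w 0%nat with B0 => 0 | _ => 1 end) /\
  sgbar (4 * gamma_word w - 2) = (match w 0%nat with S3 => 1 | _ => 0 end).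
Proof.
  intros H. destruct (w 0%nat) eqn:E.
  - rewrite (g_zero w (w13_all w H E)). split; apply sg_lo; lra.
  - rewrite g_cons. rewrite E. pose proof (g_bd (fun i => w (S i))). simpl.
    split; [apply sg_hi|apply sg_lo]; lra.
  - rewrite g_cons. rewrite E. pose proof (g_bd (fun i => w (S i))). simpl.
    split; apply sg_hi; lra.
Qed.

Lemma natof_INR n : natof (INR n) = Some n.
Proof.
  unfold natof.
  assert (up (INR n) = (Z.of_nat n + 1)%Z) as ->.
  { symmetry; apply tech_up; rewrite plus_IZR, <- INR_IZR_INZ; simpl; lra. }
  rewrite Z.add_simpl_r, Nat2Z.id.
  destruct Req_EM_T; [reflexivity|contradiction].
Qed.

Lemma LDL_c0 n : (0 < n)%nat -> LDL n 1 (fun _ => Some [0]).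
Proof.
  intros Hn.
  eapply LDL_ext.
  - apply (LDL_comp n 2 1 _ _ (LDL_pair n 1 1 _ _ (LDL_proj n 0 Hn) (LDL_proj n 0 Hn)) LDL_sub).
  - intros xs _. simpl. f_equal. f_equal. ring.
Qed.

Lemma LDL_c1 n : (0 < n)%nat -> LDL n 1 (fun _ => Some [1]).
Proof.
  intros Hn.
  eapply LDL_ext.
  - apply (LDL_comp n 1 1 _ _ (LDL_c0 n Hn) LDL_ell).
  - intros xs _. simpl. replace 0 with (INR 0) by reflexivity. rewrite natof_INR. reflexivity.
Qed.

Lemma LDL_bin n a b (op : R -> R -> R) Fop :
  LDL 2 1 Fop -> (forall x y, Fop [x; y] = Some [op x y]) ->
  LDL n 1 (fun xs => Some [a xs]) -> LDL n 1 (fun xs => Some [b xs]) ->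
  LDL n 1 (fun xs => Some [op (a xs) (b xs)]).
Proof.
  intros HO HE HA HB.
  eapply LDL_ext.
  - apply (LDL_comp n 2 1 _ _ (LDL_pair n 1 1 _ _ HA HB) HO).
  - intros xs _. simpl. apply HE.
Qed.

Lemma LDL_cN n m : (0 < n)%nat -> LDL n 1 (fun _ => Some [INR m]).
Proof.
  intros Hn. induction m.
  - apply LDL_c0; auto.
  - eapply LDL_ext.
    + apply (LDL_bin n (fun _ => INR m) (fun _ => 1) Rplus _ LDL_add (fun x y => eq_refl) IHm (LDL_c1 n Hn)).
    + intros xs _. rewrite S_INR. reflexivity.
Qed.

Lemma LDL_cZ n z : (0 < n)%nat -> LDL n 1 (fun _ => Some [IZR z]).
Proof.
  intros Hn. destruct z.
  - apply LDL_c0; auto.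
  - eapply LDL_ext. apply (LDL_cN n (Pos.to_nat p) Hn).
    intros; simpl. rewrite INR_IZR_INZ, positive_nat_Z. reflexivity.
  - eapply LDL_ext.
    apply (LDL_bin n (fun _ => 0) (fun _ => INR (Pos.to_nat p)) Rminus _ LDL_sub (fun x y => eq_refl) (LDL_c0 n Hn) (LDL_cN n _ Hn)).
    intros; simpl. rewrite INR_IZR_INZ, positive_nat_Z. f_equal. f_equal.
    rewrite <- Pos2Z.opp_pos, opp_IZR. ring.
Qed.

Lemma LDL_expr n e : (0 < n)%nat -> LDL n 1 (fun xs => Some [eval xs e]).
Proof.
  intros Hn. induction e; simpl.
  - destruct (Nat.lt_ge_cases i n) as [Hi|Hi].
    + apply LDL_proj; auto.
    + eapply LDL_ext. apply (LDL_c0 n Hn).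
      intros xs Hl. rewrite nth_overflow by lia. reflexivity.
  - apply LDL_cZ; auto.
  - exact (LDL_bin n _ _ Rplus _ LDL_add (fun x y => eq_refl) IHe1 IHe2).
  - exact (LDL_bin n _ _ Rminus _ LDL_sub (fun x y => eq_refl) IHe1 IHe2).
  - exact (LDL_bin n _ _ Rmult _ LDL_mul (fun x y => eq_refl) IHe1 IHe2).
  - eapply LDL_ext. apply (LDL_comp n 1 1 _ _ IHe LDL_sg). intros; reflexivity.
  - eapply LDL_ext. apply (LDL_comp n 1 1 _ _ IHe LDL_half). intros; reflexivity.
Qed.

Fixpoint closed (e : expr) : Prop :=
  match e with
  | EVar _ => False | ECst _ => True
  | EAdd a b | ESub a b | EMul a b => closed a /\ closed b
  | ESg _ => True | EHalf a => closed a end.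

Lemma closed_deg e v : closed e -> deg v e = 0%nat.
Proof.
  induction e; simpl; intros H; try tauto; try reflexivity;
  try (destruct H as [H1 H2]; rewrite IHe1, IHe2 by auto; reflexivity).
  all: auto.
Qed.

Definition lin3 a0 a1 a2 b :=
  EAdd (EMul a0 (EVar 0)) (EAdd (EMul a1 (EVar 1)) (EAdd (EMul a2 (EVar 2)) b)).

Lemma lin3_ess a0 a1 a2 b : closed a0 -> closed a1 -> closed a2 -> closed b ->
  ess_linear false [0%nat; 1%nat; 2%nat] (lin3 a0 a1 a2 b).
Proof.
  intros H0 H1 H2 Hb. exists [a0; a1; a2], b.
  split; [reflexivity|]. split.
  { intros a Ha. split; [|discriminate]. intros v _.
    destruct Ha as [<-|[<-|[<-|[]]]]; apply closed_deg; auto. }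
  split. { intros v _; apply closed_deg; auto. }
  split. { discriminate. }
  intros env. simpl. ring.
Qed.

Definition h1 := ESg (EMul (ECst 4) (EVar 2)).
Definition h3 := ESg (ESub (EMul (ECst 4) (EVar 2)) (ECst 2)).
Definition selS (G : sym -> expr) :=
  EAdd (EMul (ESub (ECst 1) h1) (G B0)) (EAdd (EMul (ESub h1 h3) (G S1)) (EMul h3 (G S3))).
Definition eqk k := ESub (ESg (EAdd (ESub (EVar 0) (ECst (Z.of_nat k))) (ECst 1)))
                         (ESg (ESub (EVar 0) (ECst (Z.of_nat k)))).
Fixpoint sel N (F : nat -> sym -> expr) :=
  match N with O => ECst 0 | S N' => EAdd (sel N' F) (EMul (eqk N') (selS (F N'))) end.

Lemma closed_sel N F : (forall k s, closed (F k s)) -> closed (sel N F).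
Proof.
  intros H. induction N; simpl; auto.
  repeat split; auto.
Qed.

Lemma eval_selS env r G : nth 2 env 0 = gamma_word r -> word13 r ->
  eval env (selS G) = eval env (G (r 0%nat)).
Proof.
  intros E H. destruct (readsym r H) as [A B].
  unfold selS, h1, h3. simpl. rewrite E, A, B.
  destruct (r 0%nat); ring.
Qed.

Lemma eval_eqk env q k : nth 0 env 0 = INR q ->
  eval env (eqk k) = if Nat.eqb q k then 1 else 0.
Proof.
  intros E. unfold eqk. simpl. rewrite E, <- INR_IZR_INZ.
  destruct (Nat.eqb_spec q k).
  - subst. rewrite sg_hi, sg_lo; lra.
  - destruct (Nat.lt_ge_cases q k) as [h|h].
    +
      assert (INR (S q) <= INR k) by (apply le_INR; lia). rewrite S_INR in H.
      rewrite sg_lo, sg_lo; lra.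
    + assert (INR (S k) <= INR q) by (apply le_INR; lia). rewrite S_INR in H.
      rewrite sg_hi, sg_hi; lra.
Qed.

Lemma eval_sel env q r N F : nth 0 env 0 = INR q -> nth 2 env 0 = gamma_word r -> word13 r ->
  eval env (sel N F) = if Nat.ltb q N then eval env (F q (r 0%nat)) else 0.
Proof.
  intros Eq Er Hr. induction N.
  - destruct q; reflexivity.
  - change (eval env (sel N F) + eval env (eqk N) * eval env (selS (F N)) =
      (if q <? S N then eval env (F q (r 0%nat)) else 0)).
    rewrite IHN, (eval_eqk env q N Eq), (eval_selS env r _ Er Hr).
    destruct (Nat.ltb_spec q N), (Nat.eqb_spec q N), (Nat.ltb_spec q (S N)); subst;
      try lia; ring.
Qed.

Definition l0e := EAdd (ESg (EMul (ECst 4) (EVar 1)))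
                       (EMul (ECst 2) (ESg (ESub (EMul (ECst 4) (EVar 1)) (ECst 2)))).
Lemma eval_l0e env l : nth 1 env 0 = gamma_word l -> word13 l -> eval env l0e = symval (l 0%nat).
Proof.
  intros E H. destruct (readsym l H) as [A B]. unfold l0e; simpl. rewrite E, A, B.
  destruct (l 0%nat); simpl; ring.
Qed.

Definition symZ (s : sym) : Z := match s with B0 => 0%Z | S1 => 1%Z | S3 => 3%Z end.
Lemma symZ_val s : IZR (symZ s) = symval s.
Proof. destruct s; reflexivity. Qed.

Definition quarter := EHalf (EHalf (ECst 1)).
Definition sixteenth := EHalf (EHalf quarter).

Section Mach.
Variable M : TM.
Definition qn k s := fst (fst (delta M k s)).
Definition ws k s := snd (fst (delta M k s)).
Definition mv k s := snd (delta M k s).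

Definition F1 k s := ECst (Z.of_nat (qn k s)).
Definition Fa1 k s := match mv k s with MoveR => quarter | MoveL => ECst 4 end.
Definition Fb1 k s := match mv k s with
  | MoveR => EMul quarter (ECst (symZ (ws k s))) | MoveL => ESub (ECst 0) l0e end.
Definition Fa2 k s := match mv k s with MoveR => ECst 4 | MoveL => quarter end.
Definition Fb2 k s := match mv k s with
  | MoveR => ECst (- symZ s)
  | MoveL => EAdd (EMul quarter l0e) (EMul sixteenth (ECst (symZ (ws k s) - symZ s))) end.

Definition E1 := lin3 (ECst 0) (ECst 0) (ECst 0) (sel (nQ M) F1).
Definition E2 := lin3 (ECst 0) (sel (nQ M) Fa1) (ECst 0) (sel (nQ M) Fb1).
Definition E3 := lin3 (ECst 0) (ECst 0) (sel (nQ M) Fa2) (sel (nQ M) Fb2).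
End Mach.

Theorem mainTheorem8 (M : TM) :
  exists NextBar : list R -> option (list R),
    LDL 3 3 NextBar /\
    (exists e1 e2 e3 : expr,
        ess_linear false [0%nat; 1%nat; 2%nat] e1 /\
        ess_linear false [0%nat; 1%nat; 2%nat] e2 /\
        ess_linear false [0%nat; 1%nat; 2%nat] e3 /\
        forall xs, length xs = 3%nat -> NextBar xs = Some [eval xs e1; eval xs e2; eval xs e3]) /\
    forall C : config,
      (cq C < nQ M)%nat -> word13 (cl C) -> word13 (cr C) ->
      NextBar (gamma_config C) = Some (gamma_config (Next M C)).
Proof.
  exists (fun xs => Some [eval xs (E1 M); eval xs (E2 M); eval xs (E3 M)]).
  split.
  { assert (H3 : (0 < 3)%nat) by lia.
    eapply LDL_ext.
    - exact (LDL_pair 3 2 1 _ _ (LDL_pair 3 1 1 _ _ (LDL_expr 3 (E1 M) H3) (LDL_expr 3 (E2 M) H3))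
                                (LDL_expr 3 (E3 M) H3)).
    - intros; reflexivity. }
  split.
  { exists (E1 M), (E2 M), (E3 M).
    assert (Hc : forall F : nat -> sym -> expr, (forall k s, closed (F k s)) -> closed (sel (nQ M) F))
      by (intros; apply closed_sel; auto).
    split; [|split; [|split]].
    - apply lin3_ess; simpl; auto. apply Hc. intros; exact I.
    - apply lin3_ess; simpl; auto; apply Hc; intros k s; unfold Fa1, Fb1;
        destruct (mv M k s); simpl; auto.
    - apply lin3_ess; simpl; auto; apply Hc; intros k s; unfold Fa2, Fb2;
        destruct (mv M k s); simpl; auto.
    - reflexivity. }
  intros [q l r] Hq Hl Hr. simpl in Hq, Hl, Hr.
  unfold gamma_config at 1. simpl cq; simpl cl; simpl cr.
  set (env := [INR q; gamma_word l; gamma_word r]).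
  assert (Eq : nth 0 env 0 = INR q) by reflexivity.
  assert (El : nth 1 env 0 = gamma_word l) by reflexivity.
  assert (Er : nth 2 env 0 = gamma_word r) by reflexivity.
  assert (Hs : forall F, eval env (sel (nQ M) F) = eval env (F q (r 0%nat))).
  { intros F. rewrite (eval_sel env q r _ F Eq Er Hr).
    destruct (Nat.ltb_spec q (nQ M)); [reflexivity|lia]. }
  unfold E1, E2, E3, lin3. cbn [eval]. rewrite !Hs.
  unfold Next. cbn [cq cl cr].
  unfold F1, Fa1, Fb1, Fa2, Fb2, qn, ws, mv.
  destruct (delta M q (r 0%nat)) as [[q' w] m] eqn:Hd. cbn [fst snd].
  rewrite El, Er.
  pose proof (g_cons l) as Gl. pose proof (g_cons r) as Gr.
  pose proof (eval_l0e [INR q; gamma_word l; gamma_word r] l eq_refl Hl) as L0.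
  destruct m; unfold gamma_config; cbn [cq cl cr]; unfold sixteenth, quarter, env; cbn [eval nth];
    rewrite ?L0, ?symZ_val, ?opp_IZR, ?minus_IZR, ?symZ_val, <- ?INR_IZR_INZ.
  -
    pose proof (g_cons (fun i => match i with 0%nat => l 0%nat | 1%nat => w | S (S j) => r (S j) end)) as G1.
    pose proof (g_cons (fun i => match i with 0%nat => w | S j => r (S j) end)) as G2.
    cbn beta iota in G1, G2.
    f_equal. f_equal; [ring|]. f_equal; [lra|]. f_equal. lra.
  -
    pose proof (g_cons (fun i => match i with 0%nat => w | S j => l j end)) as G1.
    cbn beta iota in G1.
    assert (Ee : gamma_word (fun i => l i) = gamma_word l) by (apply g_ext; reflexivity).
    f_equal. f_equal; [ring|]. f_equal; [lra|]. f_equal. lra.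
Qed.
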